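(* Let $q$ be a prime number and $l$ a positive integer. Then $\dfrac{-1}{q^{s-1}}\in\mathbb{Q}\text{-}\mathcal{KS}(q^{l})$ for every positive integer $s$ dividing $l-1$ such that $\dfrac{l-1}{s}$ is even.
   Context: Every nonzero rational $\alpha$ is written $\alpha=\alpha_1/\alpha_2$ with $\alpha_1\in\mathbb{Z}$, $\alpha_2$ a positive integer and $\gcd(\alpha_1,\alpha_2)=1$. For an integer $N\ge 2$ and a nonzero rational $\alpha=\alpha_1/\alpha_2$, $N$ is called an $\alpha$-Korselt number if $N\neq\alpha$ and $\alpha_2p-\alpha_1$ divides $\alpha_2N-\alpha_1$ (in $\mathbb{Z}$) for every prime divisor $p$ of $N$. $\mathbb{Q}\text{-}\mathcal{KS}(N)$ is the set of all $\beta\in\mathbb{Q}\setminus\{0,N\}$ such that $N$ is a $\beta$-Korselt number. *)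

(* Defs.v *)
From mathcomp Require Import all_boot all_order all_algebra.
Set Implicit Arguments. Unset Strict Implicit. Unset Printing Implicit Defensive.
Import Order.TTheory GRing.Theory Num.Theory.
Local Open Scope ring_scope.

(* alpha = alpha1 / alpha2 with alpha1 = numq alpha, alpha2 = denq alpha > 0,
   coprime (reduced form, as produced by mathcomp's rat). *)
Definition alpha_Korselt (alpha : rat) (N : nat) : Prop :=
  (2 <= N)%N /\ (N%:R : rat) != alpha /\
  forall p : nat, prime p -> (p %| N)%N ->
    (denq alpha * p%:Z - numq alpha %| denq alpha * N%:Z - numq alpha)%Z.

Definition QKS (N : nat) (beta : rat) : Prop :=
  beta != 0 /\ beta != (N%:R : rat) /\ alpha_Korselt beta N.

(* Main.v *)
Require Import Defs.
From mathcomp Require Import all_boot all_order all_algebra.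
Import Order.TTheory GRing.Theory Num.Theory.
Local Open Scope ring_scope.

Lemma odd_pow_dvd (x : int) (n : nat) : odd n -> (x + 1 %| x ^+ n + 1)%Z.
Proof.
move=> on.
have -> : x ^+ n + 1 = x ^+ n - (-1) ^+ n by rewrite -signr_odd on /= expr1 opprK.
rewrite subrXX opprK; exact: dvdz_mulr.
Qed.

Theorem proposition5p2 (q l : nat) :
  prime q -> (0 < l)%N ->
  forall s : nat, (0 < s)%N -> (s %| l.-1)%N -> ~~ odd (l.-1 %/ s) ->
    QKS (q ^ l) (- 1 / ((q ^ s.-1)%:R : rat)).
Proof.
move=> pq l0 s s0 sd ev.
have q0 : (0 < q)%N by exact: prime_gt0.
set m := (q ^ s.-1)%N.
have m0 : (0 < m)%N by rewrite expn_gt0 q0.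
have E : - 1 / (m%:R : rat) = ((-1 : int)%:~R / (m%:Z)%:~R) by rewrite rmorphN1 /=.
have cop : coprime `|(-1 : int)| `|m%:Z| by rewrite /= /coprime gcd1n.
have Hn : numq (- 1 / (m%:R : rat)) = -1.
  by rewrite E coprimeq_num // gtr0_sg ?mul1r // ltz_nat.
have Hd : denq (- 1 / (m%:R : rat)) = m%:Z.
  by rewrite E coprimeq_den //= gt_eqF // ltz_nat.
have neg : - 1 / (m%:R : rat) < 0.
  by rewrite mulN1r oppr_lt0 invr_gt0 ltr0n.
split; first by rewrite ltr0_neq0.
split.
  rewrite eq_sym; apply/negP => /eqP H; move: neg; rewrite -H ltNge ler0n //.
split.
  have q2 : (2 <= q)%N by exact: prime_gt1.
  apply: (leq_trans q2); rewrite -{1}(expn1 q) leq_pexp2l //.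
split.
  apply/negP => /eqP H; move: neg; rewrite -H ltNge ler0n //.
move=> p pp.
rewrite Euclid_dvdX // => /andP[]; rewrite dvdn_prime2 // => /eqP -> _.
rewrite Hn Hd opprK.
have e1 : (m * q = q ^ s)%N by rewrite /m -expnSr prednK.
have e2 : (m * q ^ l = (q ^ s) ^ (l.-1 %/ s).+1)%N.
  rewrite /m -expnD -expnM; congr (_ ^ _)%N.
  have := divnK sd; move: (l.-1 %/ s)%N => k hk.
  by rewrite mulnS mulnC hk -(prednK s0) -{1}(prednK l0) addnS addSn.
rewrite -!PoszM e1 e2 -natz natrX natz; apply: odd_pow_dvd; by rewrite /= ev.
Qed.
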